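(* Let $(K,\mathrm{val})$ be a valued field in which every strict unit admits a square root in $K$. Then $(K,\mathrm{val})$ admits a pseudo-angular component map $\mathrm{p.an}:K^\times\to F^\times$.
   Context: Let $(G,\le)$ be a totally ordered abelian group written multiplicatively with identity $e$, and $G^2=\{g^2: g\in G\}$. Let $(K,\mathrm{val})$ be a valued field with surjective valuation $\mathrm{val}:K\to G\cup\{\infty\}$, valuation ring $B=\{x\in K:\mathrm{val}(x)\ge e\}$ (so $B^\times=\{x:\mathrm{val}(x)=e\}$), residue map $\pi:B\to F$ and residue field $F$. A strict unit is an element $x\in B^\times$ with $\pi(x)=1$. For $g\in G$, $\overline g$ denotes its class in $G/G^2$. A pseudo-angular component map is a map $\mathrm{p.an}:K^\times\to F^\times$ such that: (1) $\mathrm{p.an}(u)=\pi(u)$ for all $u\in B^\times$; (2) $\mathrm{p.an}(ux)=\pi(u)\mathrm{p.an}(x)$ for all $u\in B^\times$, $x\in K^\times$; (3) for every $g\in G$ and $c\in F^\times$ there is $w\in K$ with $\mathrm{val}(w)=g$ and $\mathrm{p.an}(w)=c$; (4) for nonzero $x_1,x_2\in K$ with $x_1+x_2\ne0$: if $\mathrm{val}(x_1)<\mathrm{val}(x_2)$ then $\mathrm{p.an}(x_1+x_2)=\mathrm{p.an}(x_1)$; if $\mathrm{val}(x_1)=\mathrm{val}(x_2)$ and $\mathrm{p.an}(x_1)+\mathrm{p.an}(x_2)\neq0$ then $\mathrm{val}(x_1+x_2)=\mathrm{val}(x_1)$ and $\mathrm{p.an}(x_1+x_2)=\mathrm{p.an}(x_1)+\mathrm{p.an}(x_2)$;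 (5) for $x,y\in K^\times$ with $\overline{\mathrm{val}(x)}=\overline{\mathrm{val}(y)}$ and $\mathrm{p.an}(x)=\mathrm{p.an}(y)$ there is $u\in K^\times$ with $y=u^2x$; (6) for all $a,u\in K^\times$ there is $k\in F^\times$ with $\mathrm{p.an}(au^2)=\mathrm{p.an}(a)k^2$. *)

(* Defs.v *)
From mathcomp Require Import all_boot all_algebra.
Set Implicit Arguments.
Unset Strict Implicit.
Unset Printing Implicit Defensive.
Import GRing.Theory.
Local Open Scope ring_scope.

Definition is_ordered_abgroup (G : Type) (mul : G -> G -> G) (e : G)
    (inv : G -> G) (le : G -> G -> Prop) : Prop :=
  ((forall a b c, mul a (mul b c) = mul (mul a b) c) /\
      (forall a b, mul a b = mul b a) /\
      (forall a, mul e a = a) /\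
      (forall a, mul (inv a) a = e) /\
      (forall a, le a a) /\
      (forall a b, le a b -> le b a -> a = b) /\
      (forall a b c, le a b -> le b c -> le a c) /\
      (forall a b, le a b \/ le b a)/\
      (forall a b c, le a b -> le (mul a c) (mul b c))).

(* G ∪ {∞} is represented by option G, with None = ∞. *)
Definition omul (G : Type) (mul : G -> G -> G) (a b : option G) : option G :=
  match a, b with Some x, Some y => Some (mul x y) | _, _ => None end.

Definition ole (G : Type) (le : G -> G -> Prop) (a b : option G) : Prop :=
  match a, b with
  | _, None => True
  | None, Some _ => False
  | Some x, Some y => le x y
  end.

Definition is_valuation (G : Type) (mul : G -> G -> G) (le : G -> G -> Prop)
    (K : fieldType) (val : K -> option G) : Prop :=
  ((forall x : K, val x = None <-> x = 0) /\
      (forall x y : K, val (x * y) = omul mul (val x) (val y)) /\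
      (forall x y : K, ole le (val x) (val (x + y)) \/ ole le (val y) (val (x + y)))/\
      (forall g : G, exists x : K, val x = Some g)).

Definition in_B (G : Type) (e : G) (le : G -> G -> Prop) (K : fieldType)
    (val : K -> option G) (x : K) : Prop := ole le (Some e) (val x).

(* pi : B -> F is the residue map: a surjective ring morphism on B whose kernel
   is the maximal ideal {x | val x > e}; F is then the residue field.
   (pi is given as a total function K -> F; its values off B are irrelevant.) *)
Definition is_residue_map (G : Type) (e : G) (le : G -> G -> Prop)
    (K : fieldType) (val : K -> option G) (F : fieldType) (pi : K -> F) : Prop :=
  ((forall x y, in_B e le val x -> in_B e le val y -> pi (x + y) = pi x + pi y) /\
      (forall x y, in_B e le val x -> in_B e le val y -> pi (x * y) = pi x * pi y) /\
      pi 1 = 1 /\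
      (forall c : F, exists x, in_B e le val x /\ pi x = c)/\
      (forall x, in_B e le val x -> (pi x = 0 <-> (in_B e le val x /\ val x <> Some e)))).

Definition strict_unit (G : Type) (e : G) (K : fieldType) (val : K -> option G)
    (F : fieldType) (pi : K -> F) (x : K) : Prop :=
  val x = Some e /\ pi x = 1.

Definition same_sq_class (G : Type) (mul : G -> G -> G) (a b : G) : Prop :=
  exists g, a = mul b (mul g g).

(* pan : K^× -> F^× (given as a function K -> F whose value at 0 is irrelevant)
   is a pseudo-angular component map: conditions (1)-(6). *)
Definition is_pseudo_angular_component (G : Type) (mul : G -> G -> G) (e : G)
    (le : G -> G -> Prop) (K : fieldType) (val : K -> option G)
    (F : fieldType) (pi : K -> F) (pan : K -> F) : Prop :=
  ((forall x : K, x != 0 -> pan x != 0) /\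
      (forall u : K, val u = Some e -> pan u = pi u) /\
      (forall u x : K, val u = Some e -> x != 0 -> pan (u * x) = pi u * pan x) /\
      (forall (g : G) (c : F), c != 0 -> exists w : K, val w = Some g /\ pan w = c) /\
      (forall x1 x2 : K, x1 != 0 -> x2 != 0 -> x1 + x2 != 0 ->
         (ole le (val x1) (val x2) /\ val x1 <> val x2 -> pan (x1 + x2) = pan x1) /\
         (val x1 = val x2 -> pan x1 + pan x2 != 0 ->
            val (x1 + x2) = val x1 /\ pan (x1 + x2) = pan x1 + pan x2)) /\
      (forall (x y : K) (gx gy : G), x != 0 -> y != 0 ->
         val x = Some gx -> val y = Some gy -> same_sq_class mul gx gy ->
         pan x = pan y -> exists u : K, u != 0 /\ y = u ^+ 2 * x)/\
      (forall a u : K, a != 0 -> u != 0 ->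
         exists k : F, k != 0 /\ pan (a * u ^+ 2) = pan a * k ^+ 2)).

(* Main.v *)
Require Import Defs.
From mathcomp Require Import all_boot all_algebra.
From mathcomp Require Import ring.
From Stdlib Require Import Classical ClassicalEpsilon FunctionalExtensionality PropExtensionality.
Import GRing.Theory.
Local Open Scope ring_scope.
Set Implicit Arguments.
Unset Strict Implicit.

Section Aux.
Variables (G : Type) (mul : G -> G -> G) (e : G) (inv : G -> G) (le : G -> G -> Prop).
Hypothesis HG : is_ordered_abgroup mul e inv le.
Variables (K : fieldType) (val : K -> option G).
Hypothesis Hval : is_valuation mul le val.

Lemma gA a b c : mul a (mul b c) = mul (mul a b) c.
Proof. by case: HG. Qed.
Lemma gC a b : mul a b = mul b a.
Proof. by case: HG => _ []. Qed.
Lemma g1 a : mul e a = a.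
Proof. by case: HG => _ [] _ []. Qed.
Lemma gV a : mul (inv a) a = e.
Proof. by case: HG => _ [] _ [] _ []. Qed.
Lemma gr1 a : mul a e = a.
Proof. by rewrite gC g1. Qed.
Lemma gVr a : mul a (inv a) = e.
Proof. by rewrite gC gV. Qed.
Lemma gAC x y z w : mul (mul x y) (mul z w) = mul (mul x z) (mul y w).
Proof.
by rewrite -!gA; congr (mul x); rewrite !gA (gC y z).
Qed.

Lemma tfree t : mul t t = e -> t = e.
Proof.
move=> Ht; case: HG => _ [] _ [] _ [] _ [] _ [] Has [] _ [] Htot Hm.
case: (Htot t e) => H.
- have := Hm _ _ t H; rewrite Ht g1 => H'; exact: Has.
- have := Hm _ _ t H; rewrite Ht g1 => H'; exact: Has.
Qed.

Lemma class_iff g g' k a : g = mul g' (mul k k) ->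
  ((exists h, g = mul a (mul h h)) <-> (exists h, g' = mul a (mul h h))).
Proof.
move=> Hg; split => -[h Hh].
- exists (mul h (inv k)).
  have -> : g' = mul g (mul (inv k) (inv k)).
    by rewrite Hg -gA gAC !gVr g1 gr1.
  by rewrite Hh -gA gAC.
- exists (mul h k). by rewrite Hg Hh -gA gAC.
Qed.

Lemma val_nz x : x != 0 -> exists g, val x = Some g.
Proof.
move=> hx; case Hv: (val x) => [g|]; first by exists g.
by case: Hval => /(_ x) [] /(_ Hv) hx0; rewrite hx0 eqxx in hx.
Qed.

Lemma val_None_nz x g : val x = Some g -> x != 0.
Proof.
move=> Hv; apply/eqP => hx; case: Hval => /(_ x) [] _ /(_ hx); by rewrite Hv.
Qed.

Lemma valM x y : val (x * y) = omul mul (val x) (val y).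
Proof. by case: Hval => _ []. Qed.

Lemma val1 : val 1 = Some e.
Proof.
have [a Ha] := @val_nz 1 (oner_neq0 K).
have := valM 1 1; rewrite mulr1 Ha /= => -[Haa].
have : mul (inv a) (mul a a) = mul (inv a) a by rewrite -Haa.
by rewrite gA gV g1 => ->.
Qed.

Lemma valdiv x y g : val x = Some g -> val y = Some g -> val (x / y) = Some e.
Proof.
move=> Hx Hy; have hy := @val_None_nz y g Hy.
rewrite valM Hx -Hy -valM divff //; exact: val1.
Qed.

Lemma ole_trans a b c : ole le a b -> ole le b c -> ole le a c.
Proof.
case: a b c => [a|] [b|] [c|] //=.
by case: HG => _ [] _ [] _ [] _ [] _ [] _ [] Ht _; apply: Ht.
Qed.

Lemma inB_add x y : in_B e le val x -> in_B e le val y -> in_B e le val (x + y).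
Proof.
rewrite /in_B => hx hy; case: Hval => _ [] _ [] /(_ x y) [] h _.
- exact: ole_trans hx h.
- exact: ole_trans hy h.
Qed.

Lemma inB_e x : val x = Some e -> in_B e le val x.
Proof.
by rewrite /in_B => ->; case: HG => _ [] _ [] _ [] _ [] Hr _; apply: Hr.
Qed.

Definition Pr g := fun a => (exists h, g = mul a (mul h h)) /\
                  ((exists h, g = mul e (mul h h)) -> a = e).
Definition rr g := epsilon (inhabits e) (Pr g).

Lemma rr_spec g : Pr g (rr g).
Proof.
apply: epsilon_spec.
case: (classic (exists h, g = mul e (mul h h))) => H.
- exists e; split => //.
- exists g; split; last by [].
  by exists e; rewrite g1 gr1.
Qed.

Lemma rr_class g k : rr (mul g (mul k k)) = rr g.
Proof.
rewrite /rr; congr epsilon; apply: functional_extensionality => a.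
apply: propositional_extensionality; rewrite /Pr.
have E := @class_iff (mul g (mul k k)) g k _ erefl.
by rewrite (E a) (E e).
Qed.

Lemma rr_e : rr e = e.
Proof. case: (rr_spec e) => _ ->; by [|exists e; rewrite !g1]. Qed.

Definition hh g := epsilon (inhabits e)
   (fun h => g = mul (rr g) (mul h h) /\ (g = rr g -> h = e)).

Lemma hh_spec g : g = mul (rr g) (mul (hh g) (hh g)) /\ (g = rr g -> hh g = e).
Proof.
apply: (epsilon_spec (inhabits e) (fun h => g = mul (rr g) (mul h h) /\ (g = rr g -> h = e))).
case: (classic (g = rr g)) => H.
- by exists e; split => //; rewrite -H g1 gr1.
- case: (rr_spec g) => -[h0 Hh0] _; by exists h0.
Qed.

Definition SS h := epsilon (inhabits (1 : K))
   (fun x => val x = Some h /\ (h = e -> x = 1)).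

Lemma SS_spec h : val (SS h) = Some h /\ (h = e -> SS h = 1).
Proof.
apply: (epsilon_spec (inhabits (1:K)) (fun x => val x = Some h /\ (h = e -> x = 1))).
case: (classic (h = e)) => H.
- by exists 1; split => //; rewrite H val1.
- case: Hval => _ [] _ [] _ /(_ h) [x Hx]; by exists x.
Qed.

Definition QQ g := SS (rr g) * SS (hh g) ^+ 2.

Lemma QQ_val g : val (QQ g) = Some g.
Proof.
rewrite /QQ expr2 !valM !(proj1 (SS_spec _)) /=.
by rewrite -(proj1 (hh_spec g)).
Qed.

Lemma QQ_e : QQ e = 1.
Proof.
have he : hh e = e by apply: (proj2 (hh_spec e)); rewrite rr_e.
by rewrite /QQ he rr_e (proj2 (SS_spec e)) // expr2 !mulr1.
Qed.

Lemma QQ_sq g k : exists w, w != 0 /\ QQ (mul g (mul k k)) = QQ g * w ^+ 2.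
Proof.
have n1 := @val_None_nz _ _ (proj1 (SS_spec (hh g))).
exists (SS (hh (mul g (mul k k))) / SS (hh g)); split.
- rewrite mulf_neq0 ?invr_eq0 //; exact: @val_None_nz _ _ (proj1 (SS_spec _)).
- rewrite /QQ rr_class. field. exact n1.
Qed.


Variables (F : fieldType) (pi : K -> F).
Hypothesis Hpi : is_residue_map e le val pi.
Hypothesis Hsqrt : forall x : K, strict_unit e val pi x -> exists y : K, y ^+ 2 = x.

Lemma piD x y : in_B e le val x -> in_B e le val y -> pi (x + y) = pi x + pi y.
Proof. by case: Hpi => H _; apply: H. Qed.
Lemma piM x y : in_B e le val x -> in_B e le val y -> pi (x * y) = pi x * pi y.
Proof. by case: Hpi => _ [] H _; apply: H. Qed.
Lemma pi_unit x : val x = Some e -> pi x != 0.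
Proof.
move=> Hx; apply/eqP => h0; case: Hpi => _ [] _ [] _ [] _ /(_ x (inB_e Hx)) [] H _.
by have [_] := H h0.
Qed.
Lemma pi_nz_val x : in_B e le val x -> pi x != 0 -> val x = Some e.
Proof.
move=> hB hp; apply: NNPP => hne; move/eqP: hp; apply.
by case: Hpi => _ [] _ [] _ [] _ /(_ x hB) [] _; apply.
Qed.
Lemma pi_zero x : in_B e le val x -> val x <> Some e -> pi x = 0.
Proof. by move=> hB hne; case: Hpi => _ [] _ [] _ [] _ /(_ x hB) [] _; apply. Qed.

Definition pan x := match val x with Some g => pi (x / QQ g) | None => 0 end.

Lemma pan_eq x g : val x = Some g -> pan x = pi (x / QQ g).
Proof. by rewrite /pan => ->. Qed.

Lemma QQ_nz g : QQ g != 0.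
Proof. exact: (@val_None_nz _ g (QQ_val g)). Qed.

Lemma main_aux : is_pseudo_angular_component mul e le val pi pan.
Proof.
split; [|split; [|split; [|split; [|split; [|split]]]]].
- move=> x hx; have [g Hg] := val_nz hx; rewrite (pan_eq Hg).
  exact/pi_unit/(valdiv Hg (QQ_val g)).
- move=> u Hu; by rewrite (pan_eq Hu) QQ_e divr1.
- move=> u x Hu hx; have [g Hg] := val_nz hx.
  have Hux : val (u * x) = Some g by rewrite valM Hu Hg /= g1.
  rewrite (pan_eq Hux) (pan_eq Hg) -mulrA piM //; first exact: inB_e.
  exact/inB_e/(valdiv Hg (QQ_val g)).
- move=> g c hc.
  case: Hpi => _ [] _ [] _ [] /(_ c) [b [hbB hbc]] _.
  have Hb : val b = Some e by apply: pi_nz_val => //; rewrite hbc.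
  exists (b * QQ g).
  have Hw : val (b * QQ g) = Some g by rewrite valM Hb QQ_val /= g1.
  split => //; rewrite (pan_eq Hw) mulfK ?hbc //; exact: QQ_nz.
- move=> x1 x2 h1 h2 h12.
  have [g1' H1] := val_nz h1; have [g2 H2] := val_nz h2.
  have Ha1 := valdiv H1 (QQ_val g1').
  split.
  + rewrite H1 H2 /= => -[hle hne].
    have [v Hv] := @val_nz (QQ g1')^-1 (invr_neq0 (QQ_nz g1')).
    have Hv' : mul g1' v = e.
      have := valM (QQ g1') (QQ g1')^-1; rewrite divff ?QQ_nz // val1 QQ_val Hv /=.
      by case.
    have Ha2 : val (x2 / QQ g1') = Some (mul g2 v) by rewrite valM H2 Hv.
    have Ha2B : in_B e le val (x2 / QQ g1').
      rewrite /in_B Ha2 /= -Hv'.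
      by case: HG => _ [] _ [] _ [] _ [] _ [] _ [] _ [] _ Hm; apply: Hm.
    have Ha2ne : val (x2 / QQ g1') <> Some e.
      rewrite Ha2 => -[Heq]; apply: hne; congr Some.
      have : mul (mul g2 v) (inv v) = mul (mul g1' v) (inv v) by rewrite Heq Hv'.
      by rewrite -!gA gVr !gr1.
    have Hp2 := pi_zero Ha2B Ha2ne.
    have HsB : in_B e le val ((x1 + x2) / QQ g1') by rewrite mulrDl; apply: inB_add => //; exact: inB_e.
    have Hps : pi ((x1 + x2) / QQ g1') = pi (x1 / QQ g1').
      by rewrite mulrDl piD ?Hp2 ?addr0 //; exact: inB_e.
    have Hs : val ((x1 + x2) / QQ g1') = Some e.
      by apply: pi_nz_val => //; rewrite Hps; apply: pi_unit.
    have Hsum : val (x1 + x2) = Some g1'.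
      have -> : x1 + x2 = (x1 + x2) / QQ g1' * QQ g1' by rewrite divfK // QQ_nz.
      by rewrite valM Hs QQ_val /= g1.
    by rewrite (pan_eq Hsum) (pan_eq H1).
  + move=> Heq; rewrite H1 in Heq; rewrite (pan_eq H1) (pan_eq (esym Heq)) => hnz.
    have Ha2 := valdiv (esym Heq) (QQ_val g1').
    have HsB : in_B e le val ((x1 + x2) / QQ g1') by rewrite mulrDl; apply: inB_add; exact: inB_e.
    have Hps : pi ((x1 + x2) / QQ g1') = pi (x1 / QQ g1') + pi (x2 / QQ g1').
      by rewrite mulrDl piD //; exact: inB_e.
    have Hs : val ((x1 + x2) / QQ g1') = Some e.
      by apply: pi_nz_val => //; rewrite Hps.
    have Hsum : val (x1 + x2) = Some g1'.
      have -> : x1 + x2 = (x1 + x2) / QQ g1' * QQ g1' by rewrite divfK // QQ_nz.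
      by rewrite valM Hs QQ_val /= g1.
    by rewrite H1 Hsum (pan_eq Hsum).
- move=> x y gx gy hx hy Hx Hy [k Hk] Hp.
  have [w [hw HQ]] := QQ_sq gy k.
  rewrite -Hk in HQ.
  rewrite (pan_eq Hx) (pan_eq Hy) in Hp.
  set a := x / QQ gx in Hp; set b := y / QQ gy in Hp.
  have Ha : val a = Some e by exact: valdiv Hx (QQ_val gx).
  have Hb : val b = Some e by exact: valdiv Hy (QQ_val gy).
  have an : a != 0 by exact: (@val_None_nz _ _ Ha).
  have Hc : val (b / a) = Some e by exact: valdiv Hb Ha.
  have Hpc : pi (b / a) = 1.
    have pa := pi_unit Ha.
    have := piM (inB_e Hc) (inB_e Ha); rewrite divfK // -Hp => /esym.
    move/(congr1 (fun t => t / pi a)); rewrite mulfK ?divff //.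
  have [v Hv] := Hsqrt (conj Hc Hpc).
  have vn : v != 0.
    apply/eqP => v0; move: Hv; rewrite v0 expr0n /= => /esym /eqP.
    by rewrite (negbTE (@val_None_nz _ _ Hc)).
  exists (v / w); split; first by rewrite mulf_neq0 ?invr_eq0.
  have ex : x = a * QQ gx by rewrite /a divfK ?QQ_nz.
  have ey : y = b / a * a * QQ gy by rewrite divfK // /b divfK ?QQ_nz.
  rewrite ey ex HQ -Hv; field.
  exact hw.
- move=> a u ha hu.
  have [ga Ha] := val_nz ha; have [gu Hu] := val_nz hu.
  have [w [hw HQ]] := QQ_sq ga gu.
  have Hau : val (a * u ^+ 2) = Some (mul ga (mul gu gu)) by rewrite valM expr2 valM Ha Hu.
  have HA := valdiv Ha (QQ_val ga).
  have HC := valdiv Hau (QQ_val (mul ga (mul gu gu))).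
  have qn := QQ_nz ga.
  have zn : u / w != 0 by rewrite mulf_neq0 ?invr_eq0.
  have ez : a * u ^+ 2 / QQ (mul ga (mul gu gu)) = a / QQ ga * (u / w) ^+ 2.
    rewrite HQ; field; by rewrite qn hw.
  have [t Ht] := val_nz zn.
  have Hte : t = e.
    have := valdiv HC HA; rewrite ez mulrAC divff ?mul1r; last by rewrite mulf_neq0 ?invr_eq0.
    rewrite expr2 valM Ht /= => -[]; exact: tfree.
  rewrite Hte in Ht.
  exists (pi (u / w)); split; first exact: pi_unit.
  have Hz2 : val ((u / w) ^+ 2) = Some e by rewrite expr2 valM Ht /= g1.
  rewrite (pan_eq Hau) (pan_eq Ha) ez (piM (inB_e HA) (inB_e Hz2)); congr (_ * _).
  rewrite !expr2; exact: piM (inB_e Ht) (inB_e Ht).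
Qed.

End Aux.

Theorem mainTheorem1 (G : Type) (mul : G -> G -> G) (e : G) (inv : G -> G)
    (le : G -> G -> Prop) (HG : is_ordered_abgroup mul e inv le)
    (K : fieldType) (val : K -> option G) (Hval : is_valuation mul le val)
    (F : fieldType) (pi : K -> F) (Hpi : is_residue_map e le val pi)
    (Hsqrt : forall x : K, strict_unit e val pi x -> exists y : K, y ^+ 2 = x) :
  exists pan : K -> F, is_pseudo_angular_component mul e le val pi pan.
Proof.
eexists.
exact: (main_aux HG Hval Hpi Hsqrt).
Qed.
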